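(* Let $n \geq 3$ be an integer and let $\ell$ be an odd positive integer. Then the quotient group $B_n[\ell]/B_n[2\ell]$ is isomorphic to the symmetric group $S_n$. (Here $B_n[2\ell]$ is a normal subgroup of $B_n[\ell]$, being the kernel of the reduction-mod-$2\ell$ Burau map restricted to $B_n[\ell]$.)
   Context: $B_n$ denotes the braid group on $n$ strands with standard Artin generators $\sigma_1,\dots,\sigma_{n-1}$. The reduced integral Burau representation $\rho_{-1}: B_n \to GL(n-1,\mathbb{Z})$ is defined on generators by $\rho_{-1}(\sigma_1)=\begin{pmatrix}1&0\\1&1\end{pmatrix}\oplus \mathrm{Id}_{n-3}$, $\rho_{-1}(\sigma_{n-1})=\mathrm{Id}_{n-3}\oplus\begin{pmatrix}1&-1\\0&1\end{pmatrix}$, and for $1<i<n-1$, $\rho_{-1}(\sigma_i)=\mathrm{Id}_{i-2}\oplus\begin{pmatrix}1&-1&0\\0&1&0\\0&1&1\end{pmatrix}\oplus \mathrm{Id}_{n-i-2}$, where $\oplus$ denotes block-diagonal sum. For a positive integer $\ell$, let $r_\ell: GL(n-1,\mathbb{Z})\to GL(n-1,\mathbb{Z}/\ell\mathbb{Z})$ be entrywise reduction mod $\ell$. The level $\ell$ congruence subgroup of the braid group is $B_n[\ell] := \ker(r_\ell\circ\rho_{-1})$. *)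

(* Defs.v *)
From HB Require Import structures.
From mathcomp Require Import all_boot all_order all_algebra all_fingroup.
Set Implicit Arguments. Unset Strict Implicit. Unset Printing Implicit Defensive.
Import Order.TTheory GRing.Theory Num.Theory.
Local Open Scope ring_scope.

(* A letter of a braid word on n strands: (k, b) stands for the Artin
   generator sigma_{k+1} (k : 'I_(n-1), 0-based) if b = true and for its
   inverse sigma_{k+1}^{-1} if b = false.  Words (seq of letters) are the
   elements of the free group on sigma_1..sigma_{n-1}, which surjects onto
   the braid group B_n. *)
Definition braid_letter (n : nat) := ('I_n.-1 * bool)%type.

(* rho_{-1}(sigma_{k+1}) : identity plus entry -1 at (k-1,k) and +1 at (k+1,k)
   (0-based, whenever these positions exist); this is exactly the block
   description of the reduced integral Burau representation. *)
Definition burau_gen (n : nat) (k : 'I_n.-1) : 'M[int]_(n.-1) :=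
  \matrix_(a < n.-1, b < n.-1)
    ((a == b :> nat)%:Z - ((a.+1 == b :> nat) && (b == k :> nat))%:Z
                 + ((a == b.+1 :> nat) && (b == k :> nat))%:Z).

Definition burau_letter (n : nat) (x : braid_letter n) : 'M[int]_(n.-1) :=
  if x.2 then burau_gen x.1 else invmx (burau_gen x.1).

Definition burau (n : nat) (w : seq (braid_letter n)) : 'M[int]_(n.-1) :=
  foldr (fun x A => burau_letter x *m A) 1%:M w.

(* r_l (rho_{-1}(w)) = Id in GL(n-1, Z/lZ), i.e. w represents an element of
   the level-l congruence subgroup B_n[l]. *)
Definition in_congr (n l : nat) (w : seq (braid_letter n)) : Prop :=
  forall i j : 'I_n.-1,
    (burau w i j = ((i == j)%:Z : int) %[mod (l%:Z)])%Z.

(* Main.v *)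
Require Import Defs.
From mathcomp Require Import all_boot all_order all_algebra all_fingroup.
From mathcomp Require Import zify.
Set Implicit Arguments. Unset Strict Implicit. Unset Printing Implicit Defensive.
Import Order.TTheory GRing.Theory Num.Theory.
Local Open Scope ring_scope.

Section Aux.
Variable m : nat.
Local Notation n := m.+3.
Local Notation N := m.+2.

Definition Nk (k : 'I_N) : 'M[int]_N := \matrix_(a, b)
  (((a == b.+1 :> nat) && (b == k :> nat))%:Z - ((a.+1 == b :> nat) && (b == k :> nat))%:Z).

Lemma burau_genE (k : 'I_N) : burau_gen (k : 'I_n.-1) = 1%:M + Nk k.
Proof.
apply/matrixP => a b; rewrite !mxE.
have -> : (a == b) = (a == b :> nat) by [].
by do ![case: eqP => ?] => //=.
Qed.

Lemma Nk2 k : Nk k *m Nk k = 0.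
Proof.
apply/matrixP => a b; rewrite !mxE; apply: big1 => c _; rewrite !mxE.
by do ![case: eqP => ? /=] => //; lia.
Qed.

Lemma burau_gen_inv (k : 'I_N) : invmx (burau_gen (k : 'I_n.-1)) = 1%:M - Nk k.
Proof.
have h : burau_gen (k : 'I_n.-1) *m (1%:M - Nk k) = 1%:M.
  by rewrite burau_genE mulmxDl mul1mx mulmxBr mulmx1 Nk2 subr0 addrNK.
have [u _] := mulmx1_unit h.
by rewrite -[invmx _]mulmx1 -{1}h mulmxA mulVmx // mul1mx.
Qed.

Lemma burau_cat (u v : seq (braid_letter n)) : burau (u ++ v) = burau u *m burau v.
Proof.
elim: u => [|x u IH]; first by rewrite /= /burau /= mul1mx.
by rewrite cat_cons /burau /= -!/(burau _) IH mulmxA.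
Qed.

Lemma burau_rep (k : 'I_N) (p : nat) :
  burau (nseq p ((k : 'I_n.-1), true)) = 1%:M + p%:Z *: Nk k.
Proof.
elim: p => [|p IH] /=; first by rewrite /burau /= scale0r addr0.
rewrite /burau /= -/(burau _) IH /burau_letter /= burau_genE.
rewrite mulmxDl mul1mx mulmxDr mulmx1 -scalemxAr Nk2 scaler0 addr0.
by rewrite intS scalerDl scale1r addrAC addrA.
Qed.


Definition congI (c : int) (A : 'M[int]_N) := exists C : 'M[int]_N, A = 1%:M + c *: C.

Lemma congI_mul c A B : congI c A -> congI c B -> congI c (A *m B).
Proof.
move=> [C ->] [D ->]; exists (C + D + c *: (C *m D)).
rewrite mulmxDl mul1mx mulmxDr mulmx1 -scalemxAl -scalemxAr.
rewrite !scalerDr; set x := c *: C; set y := c *: D; set z := c *: _.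
by rewrite -!addrA [y + _]addrCA.
Qed.

Lemma in_congrE (c : nat) (u : seq (braid_letter n)) :
  in_congr c u <-> congI c%:Z (burau u).
Proof.
split=> [h | [C hC] i j].
  exists (\matrix_(i, j) ((burau u i j - (i == j)%:Z) %/ c%:Z)%Z).
  apply/matrixP => i j; rewrite !mxE.
  have := h i j; move/eqP; rewrite eqz_mod_dvd => /divzK.
  by rewrite mulrC => ->; rewrite natz addrC subrK.
rewrite hC !mxE mulrC; apply/eqP; rewrite eqz_mod_dvd.
by rewrite natz addrAC subrr add0r; apply/dvdzP; exists (C i j).
Qed.

Definition tk (k : 'I_N) : {perm 'I_n} := tperm (widen_ord (leqnSn _) k) (lift ord0 k).

Definition phi (w : seq (braid_letter n)) : {perm 'I_n} :=
  foldr (fun x p => tk x.1 * p)%g 1%g w.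

Lemma phi_cat u v : phi (u ++ v) = (phi u * phi v)%g.
Proof. by elim: u => [|x u IH] /=; rewrite ?mul1g // IH mulgA. Qed.

Lemma phi_rep (k : 'I_N) (q : nat) :
  phi (nseq (q.*2.+1) ((k : 'I_n.-1), true)) = tk k.
Proof.
elim: q => [|q IH]; first by rewrite /= mulg1.
move: IH; rewrite doubleS /= -/(phi _) => ->.
by rewrite /tk tperm2 mulg1.
Qed.

Definition m2 (A : 'M[int]_N) : 'M['Z_2]_N := map_mx (intmul (1 : 'Z_2)) A.

Definition ycol (j : nat) : 'cV['Z_2]_N :=
  \col_a ((((a : nat) == j) || ((a : nat).+1 == j))%:R).

Lemma Z2opp (x : 'Z_2) : - x = x.
Proof. by apply/eqP; case: x => [[|[|]]]. Qed.

Lemma m2_gen k : m2 (burau_gen (k : 'I_n.-1)) = 1%:M + m2 (Nk k).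
Proof. by rewrite /m2 burau_genE map_mxD map_mx1. Qed.

Lemma m2_letter (x : braid_letter n) : m2 (burau_letter x) = m2 (burau_gen x.1).
Proof.
case: x => k [] //=; rewrite /burau_letter /= burau_gen_inv m2_gen.
rewrite /m2 map_mxB map_mx1; congr (_ + _).
by apply/matrixP => a b; rewrite !mxE Z2opp.
Qed.

Lemma key (k : 'I_N) (j : 'I_n) :
  m2 (burau_gen (k : 'I_n.-1)) *m ycol (tk k j) = ycol j.
Proof.
rewrite m2_gen mulmxDl mul1mx; apply/matrixP => a z.
rewrite !mxE (bigD1 k) //= big1 ?addr0; last first.
  move=> c hc; rewrite !mxE.
  have /negbTE -> : (c : nat) != k by [].
  by rewrite !andbF subrr mulr0z mul0r.
rewrite !mxE eqxx !andbT.
rewrite /tk; case: tpermP => [->|->|h1 h2] /=.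
- rewrite /bump add1n.
  by do ![case: eqP => ? /=]; first [ (exfalso; lia) | (apply/eqP; by []) ].
- rewrite /bump add1n.
  by do ![case: eqP => ? /=]; first [ (exfalso; lia) | (apply/eqP; by []) ].
- have h1' : (j : nat) <> k by move=> e; apply: h1; apply/val_inj.
  have h2' : (j : nat) <> k.+1 by move=> e; apply: h2; apply/val_inj.
  by do ![case: eqP => ? /=]; first [ (exfalso; lia) | (apply/eqP; by []) ].
Qed.

Lemma m2_burau_cons (x : braid_letter n) (w : seq (braid_letter n)) :
  m2 (burau (x :: w)) = m2 (burau_gen x.1) *m m2 (burau w).
Proof.
rewrite -(m2_letter x) /m2 -map_mxM.
by rewrite /burau.
Qed.

Lemma invariant (w : seq (braid_letter n)) (j : 'I_n) : m2 (burau w) *m ycol (phi w j) = ycol j.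
Proof.
elim: w j => [|x w IH] j.
  by rewrite /m2 /burau /= map_mx1 mul1mx perm1.
rewrite m2_burau_cons /= -/(phi w) permM -mulmxA IH.
exact: key.
Qed.

Definition ecol (i : nat) : 'cV['Z_2]_N := \col_a (((a : nat) == i)%:R).

Lemma ycolS i : ycol i.+1 = ecol i.+1 + ecol i.
Proof.
apply/matrixP => a z; rewrite !mxE.
by do ![case: eqP => ? /=]; first [ (exfalso; lia) | (apply/eqP; by []) ].
Qed.

Lemma ycol0 : ycol 0 = ecol 0.
Proof.
apply/matrixP => a z; rewrite !mxE.
by do ![case: eqP => ? /=]; first [ (exfalso; lia) | (apply/eqP; by []) ].
Qed.

Lemma mul_ecol (M : 'M['Z_2]_N) (i : 'I_N) a z : (M *m ecol i) a z = M a i.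
Proof.
rewrite !mxE (bigD1 i) //= big1 => [|c hc]; rewrite !mxE ?eqxx ?mulr1 ?addr0 //.
have /negbTE -> : (c : nat) != i by [].
by rewrite mulr0.
Qed.

Lemma m2_one (M : 'M['Z_2]_N) : (forall j : 'I_n, M *m ycol j = ycol j) -> M = 1%:M.
Proof.
move=> h.
have he : forall i, (i < N)%N -> M *m ecol i = ecol i.
  elim => [_|i IH hi]; first by have := h ord0; rewrite /= ycol0.
  have hi' : (i.+1 < n)%N by lia.
  have := h (Ordinal hi'); rewrite /= ycolS mulmxDr IH; last by lia.
  by move/addIr.
apply/matrixP => a b.
have := he b (ltn_ord b); move/matrixP/(_ a 0); rewrite mul_ecol => ->.
by rewrite !mxE.
Qed.

Lemma ycol_neq (a b : nat) : (a < b)%N -> (b < n)%N -> ycol a <> ycol b.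
Proof.
move=> hab hb e.
have hr : forall r (hr : (r < N)%N),
    ((r == a) || (r.+1 == a)) = ((r == b) || (r.+1 == b)).
  move=> r hr; move/matrixP: e => /(_ (Ordinal hr) 0); rewrite !mxE /=.
  by do 2!case: (_ || _) => //; move/eqP.
case: (ltnP a.+1 b) => h1.
  by move: (hr a (ltn_trans h1 hb)); do ![case: eqP => ?] => //; lia.
clear e; case: a hab h1 hr => [|a] hab h1 hr.
  have h2 : (1 < N)%N by [].
  by move: (hr 1%N h2); do ![case: eqP => ?] => //; lia.
have h2 : (a < N)%N by lia.
by move: (hr a h2); do ![case: eqP => ?] => //; lia.
Qed.

Lemma ycol_inj (a b : 'I_n) : ycol a = ycol b -> a = b.
Proof.
move=> e; apply/val_inj; case: (ltngtP a b) => // h.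
- by case: (ycol_neq h (ltn_ord b)).
- by case: (ycol_neq h (ltn_ord a)).
Qed.

Lemma z2_eq (a b : int) : ((a%:~R : 'Z_2) = b%:~R) <-> (a = b %[mod 2])%Z.
Proof.
have red : forall z : int, (z%:~R : 'Z_2) = ((z %% 2)%Z)%:~R.
  move=> z; rewrite {1}(divz_eq z 2) rmorphD rmorphM /=.
  have -> : (2%:~R : 'Z_2) = 0 by apply/eqP.
  by rewrite mulr0 add0r.
have r01 : forall z : int, (z %% 2 = 0 \/ z %% 2 = 1)%Z.
  move=> z; have h1 := @modz_ge0 z 2 isT; have h2 := @ltz_pmod z 2 isT; lia.
rewrite red (red b).
by case: (r01 a) => ->; case: (r01 b) => ->; split => //; move/eqP.
Qed.

Variable l : nat.
Hypothesis lodd : odd l.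

Definition Pl (s : {perm 'I_n}) := exists2 u, in_congr l u & phi u = s.

Lemma Pl1 : Pl 1%g.
Proof.
exists [::] => //; apply/in_congrE; exists 0.
by rewrite scaler0 addr0.
Qed.

Lemma PlM s t : Pl s -> Pl t -> Pl (s * t)%g.
Proof.
move=> [u hu <-] [v hv <-]; exists (u ++ v); last exact: phi_cat.
move/in_congrE: hu => hu; move/in_congrE: hv => hv.
by apply/in_congrE; rewrite burau_cat; apply: congI_mul.
Qed.

Lemma Pltk k : Pl (tk k).
Proof.
exists (nseq l ((k : 'I_n.-1), true)).
  by apply/in_congrE; rewrite burau_rep; exists (Nk k).
by rewrite -(odd_double_half l) lodd add1n phi_rep.
Qed.

Lemma Pl_adj (a b : 'I_n) : (b : nat) = (a : nat).+1 -> Pl (tperm a b).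
Proof.
move=> hb.
have ha : (a < N)%N by have := ltn_ord b; lia.
have -> : a = widen_ord (leqnSn _) (Ordinal ha) by apply/val_inj.
have -> : b = lift ord0 (Ordinal ha) by apply/val_inj; rewrite /= /bump /= hb.
exact: Pltk.
Qed.

Lemma Pl_tperm d (a b : 'I_n) : (b : nat) = (a + d.+1)%N -> Pl (tperm a b).
Proof.
elim: d a b => [|d IH] a b hb; first by apply: Pl_adj; lia.
have hb' : (a + d.+1 < n)%N by have := ltn_ord b; lia.
set b' := Ordinal hb'.
have e : (tperm a b' ^ tperm b' b)%g = tperm a b.
  rewrite tpermJ tpermL tpermD //; apply/eqP => /(congr1 val) /=; lia.
rewrite -e /conjg tpermV; apply: PlM; first by apply: Pl_adj => /=; lia.
apply: PlM; first by apply: IH.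
by apply: Pl_adj => /=; lia.
Qed.

Lemma Pl_all s : Pl s.
Proof.
have [ts -> _] := prod_tpermP s.
elim: ts => [|[x y] ts IH]; first by rewrite big_nil; exact: Pl1.
rewrite big_cons; apply: PlM => //=.
case: (ltngtP x y) => hxy.
- by apply: (@Pl_tperm (y - x).-1); lia.
- by rewrite tpermC; apply: (@Pl_tperm (x - y).-1); lia.
- have -> : x = y by apply/val_inj.
  rewrite tperm1; exact: Pl1.
Qed.

Lemma mod2l (x y : int) :
  (x = y %[mod ((2 * l)%N)%:Z])%Z <-> (x = y %[mod l%:Z])%Z /\ (x = y %[mod 2])%Z.
Proof.
have cop : coprimez 2 l%:Z by rewrite coprimezE /= coprime2n.
split.
  move/eqP; rewrite eqz_mod_dvd PoszM (Gauss_dvdz _ cop) => /andP [h1 h2].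
  by split; apply/eqP; rewrite eqz_mod_dvd.
move=> [/eqP h1 /eqP h2]; apply/eqP.
rewrite eqz_mod_dvd PoszM (Gauss_dvdz _ cop).
by rewrite -!eqz_mod_dvd h1 h2.
Qed.

End Aux.

Local Close Scope ring_scope.

Theorem theorem3p1 (n l : nat) :
  3 <= n -> odd l -> 0 < l ->
  exists phi : seq (braid_letter n) -> {perm 'I_n},
    [/\ (forall u v, in_congr l u -> in_congr l v ->
           phi (u ++ v) = (phi u * phi v)%g),
        (forall u, in_congr l u -> (phi u = 1%g <-> in_congr (2 * l) u))
      & (forall s : {perm 'I_n}, exists2 u, in_congr l u & phi u = s)].
Proof.
case: n => [|[|[|m]]] // _ lodd _.
exists (@phi m); split.
- by move=> u v _ _; exact: phi_cat.
- move=> u hu; split.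
  + move=> h1.
    have hm : m2 (burau u) = (1%:M)%R.
      by apply: m2_one => j; have := invariant u j; rewrite h1 perm1.
    move=> i j.
    have e2 : (burau u i j = (i == j)%:Z %[mod 2])%Z.
      apply/z2_eq; have := congr1 (fun M : 'M['Z_2]_(m.+2) => M i j) hm; rewrite !mxE => ->.
      by case: (i == j).
    exact/(mod2l lodd)/(conj (hu i j) e2).
  + move=> h2; apply/permP => j; rewrite perm1; apply: ycol_inj.
    have hm : m2 (burau u) = (1%:M)%R.
      apply/matrixP => i j'; rewrite !mxE.
      have [_ e2] := (mod2l lodd _ _).1 (h2 i j').
      by move/z2_eq: e2 => ->; case: (i == j').
    by have := invariant u j; rewrite hm mul1mx.
- by move=> s; exact: Pl_all.
Qed.
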